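(* Let $X$ and $Y$ be separable metric spaces and let $f : X \to Y$ be a bijection such that both $f$ and $f^{-1} : Y \to X$ are open-LC functions. Then $f$ is a countable homeomorphism, i.e., $X$ can be partitioned into countably many pairwise disjoint sets $X_i$ such that every restriction $f|_{X_i} : X_i \to f(X_i)$ is a homeomorphism.
   Context: A subset of a topological space is an LC-set if it is the intersection of an open set and a closed set. A function $f : X \to Y$ (not necessarily continuous) is open-LC if for every open $U \subset X$ the image $f(U)$ is an LC-set in $Y$. *)

(* Defs.v *)
From Stdlib Require Import Reals.
Open Scope R_scope.

Definition is_metric {X : Type} (d : X -> X -> R) : Prop :=
  (forall x y, 0 <= d x y) /\
  (forall x y, d x y = 0 <-> x = y) /\
  (forall x y, d x y = d y x) /\
  (forall x y z, d x z <= d x y + d y z).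

Definition countable_set {X : Type} (D : X -> Prop) : Prop :=
  exists c : X -> nat, forall x y, D x -> D y -> c x = c y -> x = y.

Definition separable {X : Type} (d : X -> X -> R) : Prop :=
  exists D : X -> Prop, countable_set D /\
    forall x eps, 0 < eps -> exists y, D y /\ d x y < eps.

Definition is_open {X : Type} (d : X -> X -> R) (U : X -> Prop) : Prop :=
  forall x, U x -> exists eps, 0 < eps /\ forall y, d x y < eps -> U y.

Definition is_closed {X : Type} (d : X -> X -> R) (F : X -> Prop) : Prop :=
  is_open d (fun x => ~ F x).

Definition LC_set {X : Type} (d : X -> X -> R) (A : X -> Prop) : Prop :=
  exists U F, is_open d U /\ is_closed d F /\ forall x, A x <-> (U x /\ F x).

Definition image {X Y : Type} (f : X -> Y) (A : X -> Prop) : Y -> Prop :=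
  fun y => exists x, A x /\ f x = y.

Definition open_LC {X Y : Type} (dX : X -> X -> R) (dY : Y -> Y -> R)
  (f : X -> Y) : Prop :=
  forall U, is_open dX U -> LC_set dY (image f U).

(* continuity of the restriction h|_A : A -> Y (A with the subspace metric) *)
Definition continuous_on {X Y : Type} (dX : X -> X -> R) (dY : Y -> Y -> R)
  (h : X -> Y) (A : X -> Prop) : Prop :=
  forall x, A x -> forall eps, 0 < eps -> exists delta, 0 < delta /\
    forall x', A x' -> dX x x' < delta -> dY (h x) (h x') < eps.

(* Main.v *)
Require Import Defs.
From Stdlib Require Import Reals Lra Lia Classical ClassicalEpsilon List Cantor.
Open Scope R_scope.

Lemma met_refl {A} (d : A -> A -> R) : is_metric d -> forall x, d x x = 0.
Proof. intros (H1&H2&H3&H4) x. apply H2. reflexivity. Qed.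
Lemma met_sym {A} (d : A -> A -> R) : is_metric d -> forall x y, d x y = d y x.
Proof. intros (H1&H2&H3&H4). auto. Qed.
Lemma met_tri {A} (d : A -> A -> R) : is_metric d -> forall x y z, d x z <= d x y + d y z.
Proof. intros (H1&H2&H3&H4). auto. Qed.
Lemma met_pos {A} (d : A -> A -> R) : is_metric d -> forall x y, x <> y -> 0 < d x y.
Proof. intros (H1&H2&H3&H4) x y H. destruct (H1 x y) as [h|h]; auto.
  exfalso; apply H, H2; auto. Qed.
Lemma met_nn {A} (d : A -> A -> R) : is_metric d -> forall x y, 0 <= d x y.
Proof. intros (H1&H2&H3&H4). auto. Qed.

Lemma arch_inv (e : R) : 0 < e -> exists n : nat, / (INR n + 1) < e.
Proof.
  intros He. destruct (archimed (/ e)) as [H1 _].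
  assert (0 <= IZR (up (/ e))) by (left; apply Rlt_trans with (/e); auto; apply Rinv_0_lt_compat; auto).
  destruct (IZN (up (/ e))) as [n Hn]. apply le_IZR; auto.
  exists n. rewrite Hn, <- INR_IZR_INZ in H1.
  pose proof (pos_INR n).
  rewrite <- (Rinv_inv e). apply Rinv_lt_contravar.
  - apply Rmult_lt_0_compat. apply Rinv_0_lt_compat; auto. lra.
  - lra.
Qed.

Lemma inv_pos (n : nat) : 0 < / (INR n + 1).
Proof. apply Rinv_0_lt_compat. pose proof (pos_INR n). lra. Qed.

Definition cond {A} (d : A -> A -> R) (y : A) : Prop :=
  forall e, 0 < e -> ~ countable_set (fun a => d y a < e).

Lemma countable_sub {A} (S T : A -> Prop) : (forall x, S x -> T x) ->
  countable_set T -> countable_set S.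
Proof. intros H [c Hc]. exists c. intros; auto. Qed.

Lemma to_nat_inj p q : to_nat p = to_nat q -> p = q.
Proof. intros H. rewrite <- (cancel_of_to p), <- (cancel_of_to q), H. auto. Qed.

Lemma noncond_countable {A} (d : A -> A -> R) : is_metric d -> separable d ->
  countable_set (fun y => ~ cond d y).
Proof.
  intros hm [D [[cD HcD] HD]].
  set (Q := fun y (p : nat * nat) => exists c, D c /\ cD c = fst p /\
             d c y < / (INR (snd p) + 1) /\
             countable_set (fun a => d c a < / (INR (snd p) + 1))).
  assert (HQ : forall y, ~ cond d y -> exists p, Q y p).
  { intros y Hy. unfold cond in Hy. apply not_all_ex_not in Hy as [e He].
    apply imply_to_and in He as [He Hc]. apply NNPP in Hc.
    destruct (arch_inv (e/2)) as [n Hn]; [lra|].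
    destruct (HD y (/ (INR n + 1)) (inv_pos n)) as [c [Dc Hyc]].
    exists (cD c, n). exists c. simpl. repeat split; auto.
    - rewrite met_sym; auto.
    - apply countable_sub with (2 := Hc). intros a Ha.
      pose proof (met_tri d hm y c a). lra. }
  set (sel := fun y => epsilon (inhabits (0%nat,0%nat)) (Q y)).
  set (R0 := fun (p : nat * nat) (c : A -> nat) => exists c0, D c0 /\ cD c0 = fst p /\
           forall x x', d c0 x < / (INR (snd p) + 1) -> d c0 x' < / (INR (snd p) + 1) ->
             c x = c x' -> x = x').
  set (inj := fun p => epsilon (inhabits (fun _ : A => 0%nat)) (R0 p)).
  exists (fun y => to_nat (to_nat (sel y), inj (sel y) y)).
  intros x y Hx Hy Hxy. apply to_nat_inj in Hxy. injection Hxy as H1 H2.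
  apply to_nat_inj in H1.
  assert (Qx : Q x (sel x)) by (apply epsilon_spec; auto).
  assert (Qy : Q y (sel y)) by (apply epsilon_spec; auto).
  rewrite H1 in Qx, H2.
  destruct Qx as [c [Dc [Ec [Dx _]]]]. destruct Qy as [c' [Dc' [Ec' [Dy Cc']]]].
  assert (c = c') by (apply HcD; congruence). subst c'.
  assert (Ri : R0 (sel y) (inj (sel y))).
  { apply epsilon_spec. destruct Cc' as [k Hk]. exists k. exists c. split; auto. }
  destruct Ri as [c0 [Dc0 [Ec0 Hi]]].
  assert (c0 = c) by (apply HcD; congruence). subst c0.
  apply Hi; auto.
Qed.

Lemma cond_perfect {A} (d : A -> A -> R) : is_metric d -> separable d ->
  forall y, cond d y -> forall e, 0 < e -> exists y', cond d y' /\ y' <> y /\ d y y' < e.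
Proof.
  intros hm hs y Hy e He. apply NNPP; intros Hn.
  apply (Hy e He).
  destruct (noncond_countable d hm hs) as [c Hc].
  exists (fun x => if excluded_middle_informative (x = y) then 0%nat else S (c x)).
  intros a b Ha Hb Hab.
  destruct (excluded_middle_informative (a = y)), (excluded_middle_informative (b = y));
    try congruence.
  injection Hab as Hab. apply Hc; auto.
  - intros Ca. apply Hn. exists a; auto.
  - intros Cb. apply Hn. exists b; auto.
Qed.

Definition unb (P : nat -> Prop) := forall N, exists m, (N <= m)%nat /\ P m.

Lemma avoid_rad {A B} (dA : A -> A -> R) (h : A -> B) (hinj : forall x y, h x = h y -> x = y)
  (hm : is_metric dA) (c : A) (L : list B) :
  forall rho, 0 < rho -> exists rho', 0 < rho' /\ rho' <= rho /\
    forall b, 0 < dA c b -> dA c b < rho' -> ~ In (h b) L.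
Proof.
  induction L as [|y L IH]; intros rho Hr.
  - exists rho. repeat split; auto; lra.
  - destruct (IH rho Hr) as [r1 [Hr1 [Hr1' H1]]].
    destruct (classic (exists x, h x = y /\ x <> c)) as [[x [Hx Hxc]]|Hn].
    + exists (Rmin r1 (dA c x)). pose proof (met_pos dA hm c x (not_eq_sym Hxc)).
      repeat split.
      * apply Rmin_pos; auto.
      * pose proof (Rmin_l r1 (dA c x)); lra.
      * intros b Hb Hb' [Hy|Hy].
        -- subst y. apply hinj in Hy. subst x. pose proof (Rmin_r r1 (dA c b)); lra.
        -- apply (H1 b); auto. pose proof (Rmin_l r1 (dA c x)); lra.
    + exists r1. repeat split; auto.
      intros b Hb Hb' [Hy|Hy].
      * apply Hn. exists b. split; auto. intros ->. rewrite met_refl in Hb; auto; lra.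
      * apply (H1 b); auto.
Qed.

Lemma avoid {A B} (dA : A -> A -> R) (h : A -> B) (hinj : forall x y, h x = h y -> x = y)
  (hm : is_metric dA) (Z : A -> Prop)
  (HZ : forall z, Z z -> forall e, 0 < e -> exists z', Z z' /\ z' <> z /\ dA z z' < e)
  (c : A) (L : list B) (rho : R) : Z c -> 0 < rho ->
  exists b, Z b /\ dA c b < rho /\ ~ In (h b) L.
Proof.
  intros Zc Hr. destruct (avoid_rad dA h hinj hm c L rho Hr) as [r' [H1 [H2 H3]]].
  destruct (HZ c Zc r' H1) as [b [Zb [Hbc Hb]]].
  exists b. repeat split; auto. lra.
  apply H3; auto. apply met_pos; auto.
Qed.

Lemma twoc {B} (dB : B -> B -> R) (hm : is_metric dB) (P : nat -> Prop) (q : nat -> B)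
  (p1 p2 : B) : p1 <> p2 -> unb P ->
  (exists d, 0 < d /\ unb (fun m => P m /\ d <= dB p1 (q m))) \/
  (exists d, 0 < d /\ unb (fun m => P m /\ d <= dB p2 (q m))).
Proof.
  intros Hne HP. apply NNPP. intros Hn. apply not_or_and in Hn as [N1 N2].
  set (d0 := dB p1 p2 / 2).
  assert (Hd0 : 0 < d0) by (unfold d0; pose proof (met_pos dB hm p1 p2 Hne); lra).
  assert (A1 : ~ unb (fun m => P m /\ d0 <= dB p1 (q m))) by (intro HH; apply N1; exists d0; auto).
  assert (A2 : ~ unb (fun m => P m /\ d0 <= dB p2 (q m))) by (intro HH; apply N2; exists d0; auto).
  unfold unb in A1, A2.
  apply not_all_ex_not in A1 as [M1 A1]. apply not_all_ex_not in A2 as [M2 A2].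
  destruct (HP (M1 + M2)%nat) as [m [Hm Pm]].
  assert (B1 : dB p1 (q m) < d0).
  { apply Rnot_le_lt. intro. apply A1. exists m. split; auto; lia. }
  assert (B2 : dB p2 (q m) < d0).
  { apply Rnot_le_lt. intro. apply A2. exists m. split; auto; lia. }
  pose proof (met_tri dB hm p1 (q m) p2). rewrite (met_sym dB hm (q m) p2) in H.
  unfold d0 in *. lra.
Qed.

Lemma minr {B} (dB : B -> B -> R) (hm : is_metric dB) (y0 : B) (L : list B) :
  forall d, 0 < d -> ~ In y0 L -> exists r, 0 < r /\ r <= d /\ forall y, In y L -> r <= dB y0 y.
Proof.
  induction L as [|y L IH]; intros d Hd Hn.
  - exists d. split; [auto|split; [lra|]]. intros y [].
  - destruct (IH d Hd) as [r [H1 [H2 H3]]]. intro; apply Hn; right; auto.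
    assert (y0 <> y) by (intro; apply Hn; left; auto).
    pose proof (met_pos dB hm y0 y H).
    exists (Rmin r (dB y0 y)). repeat split.
    + apply Rmin_pos; auto.
    + pose proof (Rmin_l r (dB y0 y)); lra.
    + intros y' [<-|Hy].
      * apply Rmin_r.
      * pose proof (Rmin_l r (dB y0 y)); pose proof (H3 y' Hy); lra.
Qed.

Fixpoint build {T} (stp : nat -> list T -> T) (k : nat) : list T :=
  match k with O => nil | S k => stp k (build stp k) :: build stp k end.

Lemma build_in {T} (stp : nat -> list T -> T) k t :
  In t (build stp k) -> exists j, (j < k)%nat /\ t = stp j (build stp j).
Proof.
  induction k; simpl; [intros []|]. intros [<-|H].
  - exists k; split; auto.
  - destruct (IHk H) as [j [Hj ->]]. exists j; split; auto.
Qed.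

Lemma in_build {T} (stp : nat -> list T -> T) j k :
  (j < k)%nat -> In (stp j (build stp j)) (build stp k).
Proof.
  induction k; intros H; [lia|]. simpl.
  destruct (Nat.eq_dec j k) as [->|Hn]; [left; auto|right; apply IHk; lia].
Qed.

Definition Wk {A} (dA : A -> A -> R) (D : A -> Prop) (cD : A -> nat) (k : nat) (a : A) :=
  exists c, D c /\ cD c = fst (of_nat k) /\ dA c a < / (INR (snd (of_nat k)) + 1).

Lemma lemmaA {A B} (dA : A -> A -> R) (dB : B -> B -> R)
  (hmA : is_metric dA) (hmB : is_metric dB) (hsA : separable dA)
  (h : A -> B) (hinj : forall x y, h x = h y -> x = y)
  (hLC : forall V, is_open dB V -> LC_set dA (fun a => V (h a)))
  (Z : A -> Prop)
  (HZ : forall z, Z z -> forall e, 0 < e -> exists z', Z z' /\ z' <> z /\ dA z z' < e) :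
  continuous_on dA dB h Z.
Proof.
  intros z Zz eps Heps. apply NNPP. intros Hc.
  assert (Hs : forall n : nat, exists x, Z x /\ dA z x < / (INR n + 1) /\ eps <= dB (h z) (h x)).
  { intros n. apply NNPP; intros Hn. apply Hc. exists (/ (INR n + 1)). split; [apply inv_pos|].
    intros x' Zx' Hx'. apply Rnot_le_lt. intros Hle. apply Hn. exists x'; auto. }
  set (zs := fun n => epsilon (inhabits z) (fun x => Z x /\ dA z x < / (INR n + 1) /\ eps <= dB (h z) (h x))).
  assert (Hzs : forall n, Z (zs n) /\ dA z (zs n) < / (INR n + 1) /\ eps <= dB (h z) (h (zs n))).
  { intros n. unfold zs. apply (epsilon_spec (inhabits z) (fun x => Z x /\ dA z x < / (INR n + 1) /\ eps <= dB (h z) (h x))). apply Hs. }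
  destruct hsA as [D [[cD HcD] HD]].
  set (T := fun k b => Z b /\ ((exists a, Z a /\ Wk dA D cD k a) -> Wk dA D cD k b)).
  assert (Tavoid : forall k L, exists b, T k b /\ ~ In (h b) L).
  { intros k L. destruct (classic (exists a, Z a /\ Wk dA D cD k a)) as [[a [Za [c [Dc [Ec Hc']]]]]|Hn].
    - destruct (avoid dA h hinj hmA Z HZ a L (/ (INR (snd (of_nat k)) + 1) - dA c a) Za) as [b [Zb [Hb Hb']]].
      lra.
      exists b. split; auto. split; auto. intros _. exists c. repeat split; auto.
      pose proof (met_tri dA hmA c a b). lra.
    - destruct (avoid dA h hinj hmA Z HZ z L 1 Zz) as [b [Zb [_ Hb']]]; [lra|].
      exists b. split; auto. split; auto. intros H; contradiction. }
  set (Pool := fun (s : list (A * R * nat)) m => forall t, In t s -> snd (fst t) <= dB (h (fst (fst t))) (h (zs m))).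
  set (Spec := fun k s (t : A * R * nat) => T k (fst (fst t)) /\ 0 < snd (fst t) /\
     (forall t', In t' s -> snd (fst t) <= dB (h (fst (fst t))) (h (zs (snd t')))) /\
     (k <= snd t)%nat /\ Pool (t :: s) (snd t) /\ unb (Pool (t :: s))).
  assert (Step : forall k s, unb (Pool s) -> exists t, Spec k s t).
  { intros k s Hu.
    set (L := map (fun t : A * R * nat => h (zs (snd t))) s).
    destruct (Tavoid k L) as [b1 [Tb1 Nb1]].
    destruct (Tavoid k (h b1 :: L)) as [b2 [Tb2 Nb2]].
    assert (Hne : h b1 <> h b2) by (intro E; apply Nb2; left; auto).
    assert (Hex : exists b, T k b /\ ~ In (h b) L /\ exists d, 0 < d /\
              unb (fun m => Pool s m /\ d <= dB (h b) (h (zs m)))).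
    { destruct (twoc dB hmB (Pool s) (fun m => h (zs m)) _ _ Hne Hu) as [H|H].
      - exists b1; auto.
      - exists b2. split; auto. split; auto. intro; apply Nb2; right; auto. }
    destruct Hex as [b [Tb [Nb [d [Hd Hud]]]]].
    destruct (minr dB hmB (h b) L d Hd Nb) as [r [Hr [Hrd Hrm]]].
    destruct (Hud k) as [m [Hkm [Pm Hdm]]].
    exists (b, r, m). unfold Spec; simpl. repeat split; auto.
    - apply Tb.
    - apply Tb.
    - intros t' Ht'. apply Hrm. unfold L. apply in_map_iff. exists t'; auto.
    - intros t [<-|Ht]; simpl; [lra|]. apply Pm; auto.
    - intros N. destruct (Hud N) as [m' [Hm' [Pm' Hdm']]]. exists m'. split; auto.
      intros t [<-|Ht]; simpl; [lra|]. apply Pm'; auto. }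
  set (stp := fun k s => epsilon (inhabits (z, 1, O)) (Spec k s)).
  set (S := build stp).
  assert (Inv : forall k, unb (Pool (S k)) /\ Spec k (S k) (stp k (S k))).
  { induction k.
    - assert (U0 : unb (Pool (S O))) by (intros N; exists N; split; auto; intros t []).
      split; auto. apply (epsilon_spec (inhabits (z, 1, O)) (Spec O (S O))). apply Step; auto.
    - assert (U : unb (Pool (S (Datatypes.S k)))) by apply IHk.
      split; auto. apply (epsilon_spec (inhabits (z, 1, O)) (Spec _ _)). apply Step; auto. }
  set (bb := fun k => fst (fst (stp k (S k)))).
  set (rr := fun k => snd (fst (stp k (S k)))).
  set (mm := fun k => snd (stp k (S k))).
  assert (Key : forall j k, rr j <= dB (h (bb j)) (h (zs (mm k)))).
  { intros j k. destruct (Compare_dec.le_lt_dec j k) as [Hjk|Hjk].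
    - destruct (Inv k) as [_ [_ [_ [_ [_ [HP _]]]]]].
      apply (HP (stp j (S j))). destruct (Nat.eq_dec j k) as [->|Hn]; [left; auto|].
      right. apply in_build. lia.
    - destruct (Inv j) as [_ [_ [_ [H3 _]]]]. apply (H3 (stp k (S k))). apply in_build; auto. }
  assert (Dens : forall a, Z a -> forall rho, 0 < rho -> exists j, dA a (bb j) < rho).
  { intros a Za rho Hr. destruct (arch_inv (rho / 2)) as [n Hn]; [lra|].
    destruct (HD a _ (inv_pos n)) as [c [Dc Hc']].
    exists (to_nat (cD c, n)).
    destruct (Inv (to_nat (cD c, n))) as [_ [[_ HT] _]].
    destruct HT as [c' [Dc' [Ec' Hc'']]].
    { exists a. split; auto. exists c. rewrite cancel_of_to. simpl. split; auto. split; auto.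
      rewrite met_sym; auto. }
    rewrite cancel_of_to in Ec', Hc''. cbn [fst snd] in Ec', Hc''.
    assert (c' = c) by (apply HcD; auto). subst c'.
    fold (bb (to_nat (cD c, n))) in Hc''.
    pose proof (met_tri dA hmA a c (bb (to_nat (cD c, n)))). lra. }
  set (V := fun y => dB (h z) y < eps \/ exists j, dB (h (bb j)) y < rr j).
  assert (OV : is_open dB V).
  { intros y [Hy|[j Hy]].
    - exists (eps - dB (h z) y). split; [lra|]. intros y' Hy'. left.
      pose proof (met_tri dB hmB (h z) y y'). lra.
    - exists (rr j - dB (h (bb j)) y). split; [lra|]. intros y' Hy'. right. exists j.
      pose proof (met_tri dB hmB (h (bb j)) y y'). lra. }
  destruct (hLC V OV) as [U [F [OU [CF HUF]]]].
  assert (Fb : forall j, F (bb j)).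
  { intros j. apply (HUF (bb j)). right. exists j. rewrite met_refl; auto.
    destruct (Inv j) as [_ [_ [Hr _]]]. apply Hr. }
  assert (FZ : forall a, Z a -> F a).
  { intros a Za. apply NNPP. intros Fa. destruct (CF a Fa) as [rho [Hr Hrho]].
    destruct (Dens a Za rho Hr) as [j Hj]. apply (Hrho _ Hj). apply Fb. }
  assert (Uz : U z) by (apply (HUF z); left; rewrite met_refl; auto).
  destruct (OU z Uz) as [eta [Heta Hball]].
  destruct (arch_inv eta Heta) as [k Hk].
  assert (Hmk : (k <= mm k)%nat) by apply (Inv k).
  destruct (Hzs (mm k)) as [Zm [Dm Em]].
  assert (dA z (zs (mm k)) < eta).
  { assert (/ (INR (mm k) + 1) <= / (INR k + 1)).
    { apply Rinv_le_contravar. pose proof (pos_INR k); lra. apply le_INR in Hmk. lra. }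
    lra. }
  assert (HV : V (h (zs (mm k)))) by (apply HUF; split; auto).
  destruct HV as [HV|[j HV]].
  - lra.
  - pose proof (Key j k). lra.
Qed.

Lemma LC_ext {A} (d : A -> A -> R) (S T : A -> Prop) :
  (forall a, S a <-> T a) -> LC_set d S -> LC_set d T.
Proof. intros H [U [F [H1 [H2 H3]]]]. exists U, F. repeat split; auto; intros; firstorder. Qed.

Lemma cont_subset {A B} (dA : A -> A -> R) (dB : B -> B -> R) h (S T : A -> Prop) :
  continuous_on dA dB h S -> (forall x, T x -> S x) -> continuous_on dA dB h T.
Proof.
  intros H HT x Tx e He. destruct (H x (HT x Tx) e He) as [d [Hd H']].
  exists d; split; auto.
Qed.

Lemma cont_single {A B} (dA : A -> A -> R) (dB : B -> B -> R) h (S : A -> Prop) :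
  is_metric dB -> (forall x x', S x -> S x' -> x = x') -> continuous_on dA dB h S.
Proof.
  intros hm H x Sx e He. exists 1. split; [lra|]. intros x' Sx' _.
  rewrite (H x x' Sx Sx'), met_refl; auto.
Qed.

Theorem corollary3 (X Y : Type) (dX : X -> X -> R) (dY : Y -> Y -> R)
  (hX : is_metric dX) (hY : is_metric dY)
  (sX : separable dX) (sY : separable dY)
  (f : X -> Y) (g : Y -> X)
  (gf : forall x, g (f x) = x) (fg : forall y, f (g y) = y)
  (hf : open_LC dX dY f) (hg : open_LC dY dX g) :
  exists P : nat -> (X -> Prop),
    (forall i j x, P i x -> P j x -> i = j) /\
    (forall x, exists i, P i x) /\
    (forall i, continuous_on dX dY f (P i) /\
               continuous_on dY dX g (image f (P i))).
Proof.
  assert (finj : forall x y, f x = f y -> x = y).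
  { intros x y H. rewrite <- (gf x), <- (gf y), H. auto. }
  assert (ginj : forall x y, g x = g y -> x = y).
  { intros x y H. rewrite <- (fg x), <- (fg y), H. auto. }
  assert (contf : continuous_on dX dY f (cond dX)).
  { apply lemmaA; auto.
    - intros V HV. apply LC_ext with (2 := hg V HV). intros a. split.
      + intros [y [Vy <-]]. rewrite fg. auto.
      + intros Va. exists (f a). auto.
    - apply cond_perfect; auto. }
  assert (contg : continuous_on dY dX g (cond dY)).
  { apply lemmaA; auto.
    - intros V HV. apply LC_ext with (2 := hf V HV). intros a. split.
      + intros [y [Vy <-]]. rewrite gf. auto.
      + intros Va. exists (g a). auto.
    - apply cond_perfect; auto. }
  destruct (noncond_countable dX hX sX) as [c1 Hc1].
  destruct (noncond_countable dY hY sY) as [c2 Hc2].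
  set (P := fun i x => (i = O /\ cond dX x /\ cond dY (f x)) \/
                       (~ cond dX x /\ i = Datatypes.S (2 * c1 x)) \/
                       (cond dX x /\ ~ cond dY (f x) /\ i = Datatypes.S (Datatypes.S (2 * c2 (f x))))).
  assert (Psing : forall i x x', i <> O -> P i x -> P i x' -> x = x').
  { intros i x x' Hi Hx Hx'.
    destruct Hx as [[? _]|[[A1 A2]|[A1 [A2 A3]]]]; [lia| |];
    (destruct Hx' as [[? _]|[[B1 B2]|[B1 [B2 B3]]]]; [lia| |]); try lia.
    - apply Hc1; auto. lia.
    - apply finj. apply Hc2; auto. lia. }
  exists P. split; [|split].
  - intros i j x Hi Hj.
    destruct Hi as [[? [A1 A2]]|[[A1 A2]|[A1 [A2 A3]]]];
    destruct Hj as [[? [B1 B2]]|[[B1 B2]|[B1 [B2 B3]]]]; subst; try lia; try contradiction.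
  - intros x. destruct (classic (cond dX x)) as [C1|C1].
    + destruct (classic (cond dY (f x))) as [C2|C2].
      * exists O. left; auto.
      * eexists. right; right; eauto.
    + eexists. right; left; eauto.
  - intros i. destruct (Nat.eq_dec i O) as [->|Hi].
    + split.
      * apply cont_subset with (1 := contf). intros x [[_ [H _]]|[[_ H]|[_ [_ H]]]]; auto; lia.
      * apply cont_subset with (1 := contg). intros y [x [Px <-]].
        destruct Px as [[_ [_ H]]|[[_ H]|[_ [_ H]]]]; auto; lia.
    + split.
      * apply cont_single; auto. intros x x'. apply Psing; auto.
      * apply cont_single; auto. intros y y' [x [Px <-]] [x' [Px' <-]].
        f_equal. apply (Psing i); auto.
Qed.
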